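(* Let $m>2$ be odd and $n$ a positive integer. Then $O(m)$ divides $P(m,n)$.
   Context: For odd $m>2$, $O(m)$ is the multiplicative order of $2$ modulo $m$ (the least positive $k$ with $2^k\equiv1\pmod m$). For positive integers $m,n$, let $\mathbf{Z}_m$ be the integers modulo $m$ and $T:\mathbf{Z}_m^n\to\mathbf{Z}_m^n$, $T(a_0,\dots,a_{n-1})=(a_0+a_1,a_1+a_2,\dots,a_{n-1}+a_0)$. For $\mathbf{a}\in\mathbf{Z}_m^n$ the cycle length of $(T^k\mathbf{a})_{k\ge0}$ is the smallest positive integer $P$ such that there is $N$ with $T^{k+P}\mathbf{a}=T^k\mathbf{a}$ for all $k\ge N$. $P(m,n)$ denotes the maximum of these cycle lengths over all $\mathbf{a}\in\mathbf{Z}_m^n$. *)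

(* Defs.v *)
From mathcomp Require Import all_boot all_algebra.
Set Implicit Arguments. Unset Strict Implicit. Unset Printing Implicit Defensive.
Import GRing.Theory.

(* Vectors of Z_m^n, indices 0..n-1, entries in 'Z_m (meaningful for m > 1). *)
Definition vec (m n : nat) := {ffun 'I_n -> 'Z_m}.

(* T(a_0,...,a_{n-1}) = (a_0+a_1, a_1+a_2, ..., a_{n-1}+a_0):
   T(a)_i = a_i + a_{(i+1) mod n}  (ordS i has value i.+1 %% n). *)
Definition T (m n : nat) (a : vec m n) : vec m n :=
  [ffun i : 'I_n => (a i + a (ordS i))%R].

Definition is_eventual_period (m n : nat) (a : vec m n) (P : nat) : Prop :=
  exists N : nat, forall k : nat, N <= k -> iter (k + P) (@T m n) a = iter k (@T m n) a.

Definition is_cycle_length (m n : nat) (a : vec m n) (P : nat) : Prop :=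
  0 < P /\ is_eventual_period a P /\
  (forall Q : nat, 0 < Q -> is_eventual_period a Q -> P <= Q).

Definition is_Pmn (m n : nat) (P : nat) : Prop :=
  (exists a : vec m n, is_cycle_length a P) /\
  (forall (a : vec m n) (Q : nat), is_cycle_length a Q -> Q <= P).

Definition is_ord2 (m : nat) (k : nat) : Prop :=
  0 < k /\ 2 ^ k = 1 %[mod m] /\ (forall j : nat, 0 < j -> 2 ^ j = 1 %[mod m] -> k <= j).

(* Main.v *)
Require Import Defs.
From mathcomp Require Import all_boot all_algebra.
From Stdlib Require Import Classical.
Set Implicit Arguments. Unset Strict Implicit. Unset Printing Implicit Defensive.
Import GRing.Theory.

Section Aux.
Variables m n : nat.
Local Notation V := (vec m n).
Local Notation TT := (@T m n).

Local Open Scope ring_scope.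

Definition addv (u v : V) : V := [ffun i => u i + v i].
Definition sclv (c : 'Z_m) (v : V) : V := [ffun i => c * v i].
Definition shv (v : V) : V := [ffun i => v (ordS i)].
Definition zv : V := [ffun => 0].
Definition ev (j : 'I_n) : V := [ffun i => if i == j then 1 else 0].

Lemma T_add u v : TT (addv u v) = addv (TT u) (TT v).
Proof. apply/ffunP=> i; rewrite !ffunE addrACA. by []. Qed.

Lemma T_scl c v : TT (sclv c v) = sclv c (TT v).
Proof. apply/ffunP=> i; rewrite !ffunE mulrDr. by []. Qed.

Lemma T_sh v : TT (shv v) = shv (TT v).
Proof. by apply/ffunP=> i; rewrite !ffunE. Qed.

Lemma T_z : TT zv = zv.
Proof. by apply/ffunP=> i; rewrite !ffunE addr0. Qed.

Lemma iter_add k u v : iter k TT (addv u v) = addv (iter k TT u) (iter k TT v).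
Proof. by elim: k => //= k ->; rewrite T_add. Qed.
Lemma iter_scl k c v : iter k TT (sclv c v) = sclv c (iter k TT v).
Proof. by elim: k => //= k ->; rewrite T_scl. Qed.
Lemma iter_sh k v : iter k TT (shv v) = shv (iter k TT v).
Proof. by elim: k => //= k ->; rewrite T_sh. Qed.
Lemma iter_z k : iter k TT zv = zv.
Proof. by elim: k => //= k ->; rewrite T_z. Qed.

Variable Q : nat.
Definition good (v : V) := is_eventual_period v Q.

Lemma good_z : good zv.
Proof. by exists 0 => k _; rewrite !iter_z. Qed.

Lemma good_add u v : good u -> good v -> good (addv u v).
Proof.
move=> [N1 H1] [N2 H2]; exists (maxn N1 N2) => k hk.
rewrite !iter_add H1 ?H2 //.
- exact: leq_trans (leq_maxr _ _) hk.
- exact: leq_trans (leq_maxl _ _) hk.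
Qed.

Lemma good_scl c v : good v -> good (sclv c v).
Proof. by move=> [N H]; exists N => k hk; rewrite !iter_scl H. Qed.

Lemma good_sh v : good v -> good (shv v).
Proof. by move=> [N H]; exists N => k hk; rewrite !iter_sh H. Qed.

Lemma sh_ev j : shv (ev (ordS j)) = ev j.
Proof.
apply/ffunP=> i; rewrite !ffunE.
by rewrite (inj_eq (@ordS_inj n)).
Qed.

Lemma val_iterS k (j : 'I_n) : val (iter k (@ordS n) j) = ((j + k) %% n)%N.
Proof.
elim: k => [|k IH] /=; first by rewrite addn0 modn_small.
by rewrite /= IH addnS -addn1 modnDml addn1.
Qed.

Lemma good_ev_back k j : good (ev (iter k (@ordS n) j)) -> good (ev j).
Proof.
elim: k j => [|k IH] j //= H.
rewrite -sh_ev; apply: good_sh; apply: IH.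
by rewrite -iterSr.
Qed.

Lemma all_good (x0 : 'I_n) : val x0 = 0%N -> good (ev x0) -> forall v, good v.
Proof.
move=> hx0 H0 v.
have Hev : forall j, good (ev j).
  move=> j; apply: (@good_ev_back (n - j) j).
  suff -> : iter (n - j) (@ordS n) j = x0 by [].
  apply: val_inj; rewrite val_iterS hx0 subnKC ?modnn //.
  exact: ltnW (ltn_ord j).
have -> : v = \big[addv/zv]_(j : 'I_n) sclv (v j) (ev j).
  apply/ffunP=> i.
  rewrite (big_morph (fun w : V => w i) (op2 := addv) (id2 := zv) (op1 := +%R) (id1 := 0)).
  - rewrite (bigD1 i) //= !ffunE eqxx mulr1 big1 ?addr0 // => j /negbTE hj.
    by rewrite !ffunE eq_sym hj mulr0.
  - by move=> x y; rewrite ffunE.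
  - by rewrite ffunE.
apply: big_ind => //; first exact: good_z.
- exact: good_add.
- by move=> j _; apply: good_scl.
Qed.

End Aux.

Lemma ex_min (Pr : nat -> Prop) n : Pr n -> exists k, Pr k /\ forall j, Pr j -> k <= j.
Proof.
elim/ltn_ind: n => n IH Pn.
case: (classic (exists j, Pr j /\ j < n)) => [[j [Pj ljn]]|H].
  exact: IH j ljn Pj.
exists n; split=> // j Pj; rewrite leqNgt; apply/negP => ljn; apply: H.
by exists j.
Qed.

Lemma ex_period m n (v : vec m n) : exists Q, 0 < Q /\ is_eventual_period v Q.
Proof.
set c := #|{: vec m n}|.
pose f := fun k : 'I_c.+1 => iter k (@T m n) v.
have : ~ injective f.
  by move=> inj; have := @leq_card _ _ f inj; rewrite card_ord ltnn.
rewrite /injective => H.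
have [i Hi] := not_all_ex_not _ _ H.
have [j Hj] := not_all_ex_not _ _ Hi.
have [Hij Hne] := imply_to_and _ _ Hj.
have key : forall a b : nat, a < b -> iter a (@T m n) v = iter b (@T m n) v ->
   exists Q, 0 < Q /\ is_eventual_period v Q.
  move=> a b lab Hab; exists (b - a); split; first by rewrite subn_gt0.
  exists a => k hk.
  have -> : k + (b - a) = (k - a) + b by rewrite addnBA ?(ltnW lab) // addnC -addnBA // addnC.
  by rewrite iterD -Hab -iterD subnK.
have : val i != val j by apply/negP => /eqP /val_inj.
rewrite neq_ltn => /orP [] h.
  exact: key h Hij.
exact: key h (esym Hij).
Qed.

Local Open Scope ring_scope.

Definition sumv m n (v : vec m n) : 'Z_m := \sum_i v i.

Lemma sumv_T m n (v : vec m n) : sumv (@T m n v) = 2 * sumv v.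
Proof.
rewrite /sumv (eq_bigr (fun i => v i + v (ordS i))); last by move=> i _; rewrite ffunE.
rewrite big_split /= -(reindex_inj (P := xpredT) (F := fun i => v i) (@ordS_inj n)) /=.
by rewrite mulr2n mulrDl mul1r.
Qed.

Lemma sumv_iter m n k (v : vec m n) : sumv (iter k (@T m n) v) = 2 ^+ k * sumv v.
Proof. by elim: k => [|k IH] /=; rewrite ?mul1r // sumv_T IH exprS mulrA. Qed.

Lemma Zp_nat_eq m (Hm : (1 < m)%N) (x y : nat) :
  ((x%:R : 'Z_m) = y%:R) <-> (x = y %[mod m])%N.
Proof.
split=> [H|H].
  by have := congr1 (@nat_of_ord _) H; rewrite !val_Zp_nat.
by apply: val_inj; rewrite /= !val_Zp_nat.
Qed.

Local Close Scope ring_scope.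

Theorem proposition4p3 (m n : nat) (Hm : 2 < m) (Hodd : odd m) (Hn : 0 < n)
  (O P : nat) (HO : is_ord2 m O) (HP : is_Pmn m n P) : O %| P.
Proof.
have Hm1 : (1 < m)%N by apply: ltnW.
pose x0 : 'I_n := Ordinal Hn.
pose e0 := ev m x0.
have [Q0 [Q0pos Q0per]] := ex_period e0.
have [L0 [[L0pos L0per] L0min]] :=
  @ex_min (fun Q => 0 < Q /\ is_eventual_period e0 Q) Q0 (conj Q0pos Q0per).
have L0le : (L0 <= P)%N.
  by apply: (proj2 HP e0 L0); split => //; split => // Q hQ hQp; apply: L0min.
have [[a [Ppos [Pper Pmin]]] _] := HP.
have aL0 : is_eventual_period a L0 by apply: (@all_good m n L0 x0 erefl L0per).
have PL0 : P = L0 by apply/eqP; rewrite eqn_leq L0le Pmin.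
rewrite -PL0 in L0per.
have [N HN] := L0per.
have := congr1 (@sumv m n) (HN N (leqnn N)).
rewrite !sumv_iter.
have s1 : sumv e0 = 1%R.
  rewrite /sumv (bigD1 x0) //= !ffunE eqxx big1 ?addr0 // => j /negbTE hj.
  by rewrite ffunE hj.
rewrite s1 !mulr1 exprD -[X in _ = X]mulr1.
have u2 : (2 : 'Z_m)%R \is a GRing.unit by rewrite unitZpE // coprimen2.
move=> H; have H2P := mulrI (unitrX N u2) H.
have [Opos [HO1 Omin]] := HO.
have H2O : ((2 : 'Z_m) ^+ O = 1)%R by rewrite -natrX -[1%R]/(1%:R)%R; apply/(Zp_nat_eq Hm1).
have H2r' : ((2 : 'Z_m) ^+ (P %% O) = 1)%R.
  apply: etrans _ H2P.
  by rewrite [in RHS](divn_eq P O) exprD mulnC exprM H2O expr1n mul1r.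
have H2r : ((2 ^ (P %% O))%:R : 'Z_m)%R = 1%:R%R by rewrite natrX.
move/(Zp_nat_eq Hm1): H2r => H2r.
rewrite /dvdn; case: (posnP (P %% O)) => [//|hr].
have := Omin _ hr H2r.
by rewrite leqNgt ltn_pmod.
Qed.
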